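(* The scalar curvature $\mathrm{Sc}(C\Gamma)$ of the generalized Cartan canonical connection $C\Gamma(N)$ of the space $\mathcal{ED}MH_m^n$, computed with respect to the adapted metric $\mathbb{G}=h^*_{ab}dt^a\otimes dt^b+\varphi_{ij}dx^i\otimes dx^j+h^*_{ab}\varphi^{ij}\delta p_i^a\otimes\delta p_j^b$, has the expression $$\mathrm{Sc}(C\Gamma)=(4mc)\cdot\chi+\mathfrak{R},$$ where $\chi=h^{ab}\chi_{ab}$ and $\mathfrak{R}=\varphi^{ij}\mathfrak{R}_{ij}$ are the classical scalar curvatures of the metrics $h_{ab}(t)$ and $\varphi_{ij}(x)$.
   Context: Let $(\mathcal{T}^m,h_{ab}(t))$ be a Riemannian manifold with coordinates $(t^a)$ and $M^n$ a manifold with coordinates $(x^i)$ carrying a semi-Riemannian metric $\varphi_{ij}(x)$; let $m\neq0$ (mass), $e$ (charge), $c$ (speed of light), $A^{(a)}_{(i)}(t,x)$ a d-tensor and $\mathcal{P}(t,x)$ a smooth function. On the dual 1-jet space $E^*=J^{1*}(\mathcal{T},M)$ with coordinates $(t^a,x^i,p^a_i)$ consider the Hamiltonian $H=\frac{1}{4mc}h_{ab}\varphi^{ij}p^a_ip^b_j-\frac{e}{m^2c}h_{ab}\varphi^{ij}A^{(b)}_{(j)}p^a_i+\frac{e^2}{m^3c}h_{ab}\varphi^{ij}A^{(a)}_{(i)}A^{(b)}_{(j)}-\mathcal{P}$; the pair $(E^*,H)$ is the space $\mathcal{ED}MH_m^n$. Its fundamental vertical metrical d-tensor is $\frac12\partial^2H/\partial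 p^a_i\partial p^b_j=h^*_{ab}\varphi^{ij}$ with $h^*_{ab}=(4mc)^{-1}h_{ab}$. Let $\chi^a_{bc}$, $\gamma^k_{ij}$ be the Christoffel symbols of $h_{ab}$, $\varphi_{ij}$. The canonical nonlinear connection is $N^{(a)}_{1\,(i)b}=\chi^a_{bf}p^f_i$, $N^{(a)}_{2\,(i)j}=\gamma^r_{ij}[\frac{2e}{m}A^{(a)}_{(r)}-p^a_r]-\frac{e}{m}[\partial A^{(a)}_{(i)}/\partial x^j+\partial A^{(a)}_{(j)}/\partial x^i]$, with adapted cobasis $\{dt^a,dx^i,\delta p^a_i=dp^a_i+N^{(a)}_{1\,(i)f}dt^f+N^{(a)}_{2\,(i)r}dx^r\}$. The generalized Cartan canonical connection is $C\Gamma(N)=(\chi^a_{bc},0,\gamma^i_{jk},0)$, whose Ricci tensor has exactly two effective local Ricci d-tensors $\chi_{ab}=\chi^f_{abf}$ and $\mathfrak{R}_{ij}=\mathfrak{R}^r_{ijr}$, the classical Ricci tensors of $h_{ab}$ and $\varphi_{ij}$ (with $\chi^d_{abc}$, $\mathfrak{R}^l_{ijk}$ their curvature tensors). *)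

(* Defs.v *)
From HB Require Import structures.
From mathcomp Require Import all_boot all_order all_algebra.
From mathcomp Require Import all_classical all_reals all_analysis.
Set Implicit Arguments. Unset Strict Implicit. Unset Printing Implicit Defensive.
Import Order.TTheory GRing.Theory Num.Theory.
Import numFieldNormedType.Exports.
Local Open Scope ring_scope.

Section Defs.
Variable R : realType.

Definition pder {m : nat} (f : 'rV[R]_m -> R) (k : 'I_m) (y : 'rV[R]_m) : R :=
  derive f y (delta_mx 0 k).

Definition christoffel {m : nat} (g : 'rV[R]_m -> 'M[R]_m) (y : 'rV[R]_m)
  (a b c : 'I_m) : R :=
  2^-1 * \sum_(d < m) (invmx (g y)) a d *
    (pder (fun z => g z d c) b y + pder (fun z => g z d b) c y
     - pder (fun z => g z b c) d y).

(* curvature tensor R^l_{ijk} (Miron-Anastasiei convention) *)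
Definition riemann {m : nat} (g : 'rV[R]_m -> 'M[R]_m) (y : 'rV[R]_m)
  (l i j k : 'I_m) : R :=
  pder (fun z => christoffel g z l i j) k y - pder (fun z => christoffel g z l i k) j y
  + \sum_(r < m) (christoffel g y r i j * christoffel g y l r k
                  - christoffel g y r i k * christoffel g y l r j).

Definition ricci {m : nat} (g : 'rV[R]_m -> 'M[R]_m) (y : 'rV[R]_m) (i j : 'I_m) : R :=
  \sum_(r < m) riemann g y r i j r.

Definition scalar_curv {m : nat} (g : 'rV[R]_m -> 'M[R]_m) (y : 'rV[R]_m) : R :=
  \sum_(i < m) \sum_(j < m) (invmx (g y)) i j * ricci g y i j.

(* indices of the adapted frame on E* = J^{1*}(T,M): (a) for dt^a, (i) for dx^i,
   (a,i) for delta p^a_i *)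
Definition eidx (m n : nat) : finType := ('I_m + 'I_n + 'I_m * 'I_n)%type.

Definition mat_of (I : finType) (f : I -> I -> R) : 'M[R]_#|I| :=
  \matrix_(u, v) f (enum_val u) (enum_val v).

Definition hstar {m : nat} (mass c : R) (h : 'rV[R]_m -> 'M[R]_m) (t : 'rV[R]_m)
  (a b : 'I_m) : R := (4 * mass * c)^-1 * h t a b.

Definition adaptedG {m n : nat} (mass c : R) (h : 'rV[R]_m -> 'M[R]_m)
  (phi : 'rV[R]_n -> 'M[R]_n) (t : 'rV[R]_m) (x : 'rV[R]_n)
  (A B : eidx m n) : R :=
  match A, B with
  | inl (inl a), inl (inl b) => hstar mass c h t a b
  | inl (inr i), inl (inr j) => phi x i j
  | inr (a, i), inr (b, j) => hstar mass c h t a b * (invmx (phi x)) i j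
  | _, _ => 0
  end.

(* Ricci tensor of C Gamma(N) in the adapted frame: its only effective local
   Ricci d-tensors are chi_{ab} (the Ricci tensor of h) and R_{ij} (of phi) *)
Definition ricciCGamma {m n : nat} (h : 'rV[R]_m -> 'M[R]_m)
  (phi : 'rV[R]_n -> 'M[R]_n) (t : 'rV[R]_m) (x : 'rV[R]_n)
  (A B : eidx m n) : R :=
  match A, B with
  | inl (inl a), inl (inl b) => ricci h t a b
  | inl (inr i), inl (inr j) => ricci phi x i j
  | _, _ => 0
  end.

Definition scCGamma {m n : nat} (mass c : R) (h : 'rV[R]_m -> 'M[R]_m)
  (phi : 'rV[R]_n -> 'M[R]_n) (t : 'rV[R]_m) (x : 'rV[R]_n) : R :=
  let G := mat_of (adaptedG mass c h phi t x) in
  \sum_(u < #|eidx m n|) \sum_(v < #|eidx m n|)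
     (invmx G) u v * ricciCGamma h phi t x (enum_val u) (enum_val v).

End Defs.

(* Main.v *)
Require Import Defs.
From HB Require Import structures.
From mathcomp Require Import all_boot all_order all_algebra.
From mathcomp Require Import all_classical all_reals all_analysis.
Import Order.TTheory GRing.Theory Num.Theory.
Import numFieldNormedType.Exports.
Local Open Scope ring_scope.

Lemma sum_enum (R : realType) (I : finType) (F : I -> R) :
  \sum_(u < #|I|) F (enum_val u) = \sum_(A : I) F A.
Proof. by rewrite -big_enum_val. Qed.

Lemma sum_enum2 (R : realType) (I : finType) (F : I -> I -> R) :
  \sum_(u < #|I|) \sum_(v < #|I|) F (enum_val u) (enum_val v) = \sum_(A : I) \sum_(B : I) F A B.
Proof.
rewrite -(@sum_enum R I (fun A => \sum_B F A B)); apply: eq_bigr => u _.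
by rewrite -(@sum_enum R I (fun B => F (enum_val u) B)).
Qed.

Lemma sum_eidx (R : realType) (m n : nat) (F : eidx m n -> R) :
  \sum_(A : eidx m n) F A = \sum_(a < m) F (inl (inl a)) + \sum_(i < n) F (inl (inr i))
    + \sum_(a < m) \sum_(i < n) F (inr (a, i)).
Proof.
rewrite big_sumType /= big_sumType /= pair_big /=.
by congr (_ + _); apply: eq_bigr => -[].
Qed.

Lemma mat_ofM (R : realType) (I : finType) (f g : I -> I -> R) :
  (forall A B, \sum_C f A C * g C B = (A == B)%:R) -> mat_of f *m mat_of g = 1%:M.
Proof.
move=> H; apply/matrixP => u v; rewrite !mxE.
under eq_bigr do rewrite !mxE.
rewrite (@sum_enum R _ (fun C => f (enum_val u) C * g C (enum_val v))) H.
by rewrite (inj_eq enum_val_inj).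
Qed.
From mathcomp Require Import ring.

Definition Ginv (R : realType) (m n : nat) (mass c : R) (h : 'rV[R]_m -> 'M[R]_m)
  (phi : 'rV[R]_n -> 'M[R]_n) (t : 'rV[R]_m) (x : 'rV[R]_n)
  (A B : eidx m n) : R :=
  match A, B with
  | inl (inl a), inl (inl b) => (4 * mass * c) * invmx (h t) a b
  | inl (inr i), inl (inr j) => invmx (phi x) i j
  | inr (a, i), inr (b, j) => (4 * mass * c) * invmx (h t) a b * phi x i j
  | _, _ => 0
  end.

Lemma sum0l (R : realType) p (F : 'I_p -> R) : \sum_(i < p) 0 * F i = 0.
Proof. by rewrite big1 // => *; rewrite mul0r. Qed.
Lemma sum0r (R : realType) p (F : 'I_p -> R) : \sum_(i < p) F i * 0 = 0.
Proof. by rewrite big1 // => *; rewrite mulr0. Qed.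

Lemma unit_pd (R : realType) m (H : 'M[R]_m) :
  (forall v : 'rV[R]_m, v != 0 -> 0 < (v *m H *m v^T) 0 0) -> H \in unitmx.
Proof.
move=> pd; rewrite unitmxE unitfE; apply/negP => /det0P [v v0 vH].
by have := pd v v0; rewrite vH mul0mx mxE ltxx.
Qed.

Lemma eq_inll (m n : nat) (a b : 'I_m) :
  (inl (inl a) == inl (inl b) :> eidx m n) = (a == b).
Proof. by []. Qed.
Lemma eq_inlr (m n : nat) (a b : 'I_n) :
  (inl (inr a) == inl (inr b) :> eidx m n) = (a == b).
Proof. by []. Qed.
Lemma eq_inr (m n : nat) (a b : 'I_m) i j :
  (inr (a, i) == inr (b, j) :> eidx m n) = (a == b) && (i == j).
Proof. by []. Qed.
Lemma sum0l2 (R : realType) p q (F : 'I_p -> 'I_q -> R) : \sum_(i < p) \sum_(j < q) 0 * F i j = 0.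
Proof. by rewrite big1 // => *; rewrite sum0l. Qed.
Lemma sum0r2 (R : realType) p q (F : 'I_p -> 'I_q -> R) : \sum_(i < p) \sum_(j < q) F i j * 0 = 0.
Proof. by rewrite big1 // => *; rewrite sum0r. Qed.

Lemma GGinv (R : realType) (m n : nat) (mass c : R)
  (h : 'rV[R]_m -> 'M[R]_m) (phi : 'rV[R]_n -> 'M[R]_n) t x :
  mass != 0 -> c != 0 -> h t \in unitmx -> phi x \in unitmx ->
  forall A B, \sum_C adaptedG mass c h phi t x A C * Ginv R m n mass c h phi t x C B = (A == B)%:R.
Proof.
move=> hm hc hu pu.
have HH a b : \sum_d h t a d * invmx (h t) d b = (a == b)%:R.
  by have := congr1 (fun M : matrix _ _ _ => M a b) (mulmxV hu); rewrite !mxE.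
have PP i j : \sum_d phi x i d * invmx (phi x) d j = (i == j)%:R.
  by have := congr1 (fun M : matrix _ _ _ => M i j) (mulmxV pu); rewrite !mxE.
have PP' i j : \sum_d invmx (phi x) i d * phi x d j = (i == j)%:R.
  by have := congr1 (fun M : matrix _ _ _ => M i j) (mulVmx pu); rewrite !mxE.
case=> [[a|i]|[a i]] [[b|j]|[b j]]; rewrite sum_eidx /= ?sum0l ?sum0r ?sum0l2 ?sum0r2
  ?big1_eq ?addr0 ?add0r ?eq_inll ?eq_inlr ?eq_inr //.
- rewrite -HH; apply: eq_bigr => d _; rewrite /hstar; field; by rewrite ?hm ?hc.
- rewrite (_ : ((a == b) && (i == j))%:R = (a == b)%:R * (i == j)%:R :> R); last by case: (a == b); case: (i == j); rewrite ?mulr1 ?mulr0 ?mul0r.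
  rewrite -HH -PP' mulr_suml; apply: eq_bigr => d _.
  rewrite mulr_sumr; apply: eq_bigr => e _; rewrite /hstar; field; by rewrite ?hm ?hc.
Qed.

Theorem mainTheorem1 (R : realType) (m n : nat) (mass c : R)
  (h : 'rV[R]_m -> 'M[R]_m) (phi : 'rV[R]_n -> 'M[R]_n) :
  mass != 0 -> c != 0 ->
  (forall t, (h t)^T = h t) ->
  (forall t (v : 'rV[R]_m), v != 0 -> 0 < (v *m h t *m v^T) 0 0) ->
  (forall x, (phi x)^T = phi x) ->
  (forall x, phi x \in unitmx) ->
  forall (t : 'rV[R]_m) (x : 'rV[R]_n),
    scCGamma mass c h phi t x = (4 * mass * c) * scalar_curv h t + scalar_curv phi x.
Proof.
move=> hm hc _ hpd _ pu t x.
have hu := @unit_pd _ _ _ (hpd t).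
have GM := @mat_ofM _ _ _ _ (@GGinv _ _ _ _ _ _ _ t x hm hc hu (pu x)).
have [Gu _] := mulmx1_unit GM.
have E : invmx (mat_of (adaptedG mass c h phi t x)) = mat_of (Ginv R m n mass c h phi t x).
  by rewrite -[RHS](mulKmx Gu) GM mulmx1.
rewrite /scCGamma /= E.
under eq_bigr do under eq_bigr do rewrite mxE.
rewrite (@sum_enum2 R (eidx m n) (fun A B => Ginv R m n mass c h phi t x A B * ricciCGamma h phi t x A B)).
rewrite sum_eidx /=.
under eq_bigr do rewrite sum_eidx /= ?sum0l ?sum0r ?sum0l2 ?sum0r2 ?big1_eq ?addr0 ?add0r.
under [X in _ + X + _]eq_bigr do rewrite sum_eidx /= ?sum0l ?sum0r ?sum0l2 ?sum0r2 ?big1_eq ?addr0 ?add0r.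
rewrite [X in _ + X](_ : _ = 0); last first.
  by rewrite big1 // => a _; rewrite big1 // => i _; rewrite big1 // => B _; rewrite mulr0.
rewrite addr0 /scalar_curv mulr_sumr; congr (_ + _).
apply: eq_bigr => a _; rewrite mulr_sumr; apply: eq_bigr => b _; by rewrite mulrA.
Qed.
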